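(* Let $\Gamma=([n],E)$ be a connected simple graph and $m$ a positive integer. Then the polytopes $$Q_{\Gamma,m}=\sum_{\substack{S\subseteq[n],\,|S|\le m+1\\ \Gamma|_S\text{ connected}}}\Delta_S\qquad\text{and}\qquad Q^L_{\Gamma,m}=\sum_{\substack{S\subseteq[n],\,|S|\le m+1\\ \Gamma|_S\cong L_{|S|}}}\Delta_S$$ are normally equivalent, i.e. their normal fans coincide.
   Context: $L_r$ is the path graph on $r$ vertices and $\Gamma|_S$ is the induced subgraph on $S$; the sums are Minkowski sums over nonempty subsets $S$. For nonempty $S\subseteq[n]$, $\Delta_S=\mathrm{conv}\{e_s:s\in S\}\subset\mathbb{R}^n$, where $e_s$ are the standard basis vectors. *)

(* Defs.v *)
From HB Require Import structures.
From mathcomp Require Import all_boot all_order all_algebra.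
From mathcomp Require Import boolp reals.
Set Implicit Arguments. Unset Strict Implicit. Unset Printing Implicit Defensive.
Import Order.TTheory GRing.Theory Num.Theory.
Local Open Scope ring_scope.

Definition vset (R : realType) (n : nat) := 'rV[R]_n -> Prop.

Definition conv (R : realType) (n : nat) (V : seq 'rV[R]_n) : vset R n :=
  fun x => exists lam : 'I_(size V) -> R,
    (forall i, 0 <= lam i) /\ \sum_i lam i = 1 /\
    x = \sum_i lam i *: V`_i.

Definition simplex (R : realType) (n : nat) (S : {set 'I_n}) : vset R n :=
  conv [seq (delta_mx 0 s : 'rV[R]_n) | s <- enum S].

Definition msum2 (R : realType) (n : nat) (A B : vset R n) : vset R n :=
  fun x => exists a b, A a /\ B b /\ x = a + b.
Definition msum (R : realType) (n : nat) (Ps : seq (vset R n)) : vset R n :=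
  foldr (@msum2 R n) (fun x => x = 0) Ps.

Definition simple_graph (n : nat) (e : rel 'I_n) :=
  symmetric e /\ irreflexive e.
Definition graph_connected (n : nat) (e : rel 'I_n) :=
  forall x y, connect e x y.
Definition induced_connected (n : nat) (e : rel 'I_n) (S : {set 'I_n}) :=
  forall x y, x \in S -> y \in S ->
    connect [rel a b | [&& a \in S, b \in S & e a b]] x y.
(* Gamma|_S is isomorphic to the path graph L_{|S|} : some enumeration
   s_0, ..., s_{k-1} of S has s_i ~ s_j iff |i - j| = 1 *)
Definition induced_is_path (n : nat) (e : rel 'I_n) (S : {set 'I_n}) :=
  exists s : seq 'I_n, [/\ uniq s, (forall x, (x \in s) = (x \in S)) &
    forall i j : 'I_(size s),
      e (tnth (in_tuple s) i) (tnth (in_tuple s) j)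
      = (((i : nat).+1 == j) || ((j : nat).+1 == i))].

Definition dotv (R : realType) (n : nat) (w x : 'rV[R]_n) : R :=
  \sum_i w 0 i * x 0 i.

Definition ncone (R : realType) (n : nat) (P : vset R n) (x : 'rV[R]_n) : vset R n :=
  fun w => forall y, P y -> dotv w y <= dotv w x.

(* normal fan of P = { N_P(x) : x in P } (= normal cones of the nonempty faces);
   two polytopes are normally equivalent iff these collections of cones coincide *)
Definition normally_equivalent (R : realType) (n : nat) (P Q : vset R n) :=
  (forall x, P x -> exists y, Q y /\ forall w, ncone P x w <-> ncone Q y w) /\
  (forall y, Q y -> exists x, P x /\ forall w, ncone P x w <-> ncone Q y w).

Definition Qconn (R : realType) (n : nat) (e : rel 'I_n) (m : nat) : vset R n :=
  msum [seq @simplex R n T | T <- enum [set T : {set 'I_n} |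
    [&& T != set0, (#|T| <= m.+1)%N & `[< induced_connected e T >] ]]].

Definition Qpath (R : realType) (n : nat) (e : rel 'I_n) (m : nat) : vset R n :=
  msum [seq @simplex R n T | T <- enum [set T : {set 'I_n} |
    [&& T != set0, (#|T| <= m.+1)%N & `[< induced_is_path e T >] ]]].

(* Main.v *)
Require Import Defs.
From HB Require Import structures.
From mathcomp Require Import all_boot all_order all_algebra boolp reals.
From mathcomp Require Import lra zify.
Set Implicit Arguments. Unset Strict Implicit. Unset Printing Implicit Defensive.

Module GeoComb.
Import Order.TTheory GRing.Theory Num.Theory.
Local Open Scope ring_scope.

Section Geo.
Variables (R : realType) (n : nat).
Implicit Types (x y w : 'rV[R]_n).

Lemma dotvD w x y : dotv w (x + y) = dotv w x + dotv w y.
Proof. by rewrite /dotv -big_split /=; apply: eq_bigr => i _; rewrite mxE mulrDr. Qed.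
Lemma dotvZ w c x : dotv w (c *: x) = c * dotv w x.
Proof. by rewrite /dotv mulr_sumr; apply: eq_bigr => i _; rewrite mxE mulrCA. Qed.
Lemma dotvN w x : dotv w (- x) = - dotv w x.
Proof. by rewrite -scaleN1r dotvZ mulN1r. Qed.
Lemma dotvB w x y : dotv w (x - y) = dotv w x - dotv w y.
Proof. by rewrite dotvD dotvN. Qed.
Lemma dotv_delta w (a : 'I_n) : dotv w (delta_mx 0 a) = w 0 a.
Proof.
rewrite /dotv (bigD1 a) //= mxE !eqxx mulr1 big1 ?addr0 // => i /negbTE ne.
by rewrite mxE eqxx ne mulr0.
Qed.
Lemma sumE x : \sum_i x 0 i = dotv (const_mx 1) x.
Proof. by apply: eq_bigr => i _; rewrite mxE mul1r. Qed.

Lemma ncone_msum2 (A B : vset R n) a b w : A a -> B b ->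
  ncone (msum2 A B) (a + b) w <-> ncone A a w /\ ncone B b w.
Proof.
move=> Aa Bb; split.
- move=> H; split.
  + move=> y Ay; have := H (y + b) (ex_intro _ y (ex_intro _ b (conj Ay (conj Bb erefl)))).
    by rewrite !dotvD lerD2r.
  + move=> y By; have := H (a + y) (ex_intro _ a (ex_intro _ y (conj Aa (conj By erefl)))).
    by rewrite !dotvD lerD2l.
- move=> [HA HB] y [a' [b' [Aa' [Bb' ->]]]]; rewrite !dotvD; exact: lerD (HA _ Aa') (HB _ Bb').
Qed.

Lemma msum_pt (I : eqType) (A : I -> vset R n) (Ts : seq I) (pt : I -> 'rV[R]_n) :
  (forall T, T \in Ts -> A T (pt T)) ->
  msum [seq A T | T <- Ts] (\sum_(T <- Ts) pt T) /\
  forall w, ncone (msum [seq A T | T <- Ts]) (\sum_(T <- Ts) pt T) w <->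
     (forall T, T \in Ts -> ncone (A T) (pt T) w).
Proof.
elim: Ts => [|T Ts IH] H.
- rewrite big_nil; split => // w; split => // _ y ->; exact: lexx.
- have [IH1 IH2] := IH (fun S hS => H S ltac:(by rewrite in_cons hS orbT)).
  have HT : A T (pt T) := H T (mem_head _ _).
  rewrite big_cons /=; split.
  + by exists (pt T), (\sum_(S <- Ts) pt S).
  + move=> w; rewrite ncone_msum2 //; split.
    * move=> [h1 h2] S; rewrite in_cons => /orP [/eqP -> //| hS]; exact: (proj1 (IH2 w) h2).
    * move=> h; split; first exact: h (mem_head _ _).
      apply/(proj2 (IH2 w)) => S hS; apply h; by rewrite in_cons hS orbT.
Qed.

Lemma msum_decomp (I : eqType) (A : I -> vset R n) (Ts : seq I) x : uniq Ts ->
  msum [seq A T | T <- Ts] x ->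
  exists pt : I -> 'rV[R]_n, (forall T, T \in Ts -> A T (pt T)) /\ x = \sum_(T <- Ts) pt T.
Proof.
elim: Ts x => [|T Ts IH] x /=.
- move=> _ ->; exists (fun _ => 0); split => //; by rewrite big_nil.
- move=> /andP [nT uTs] [a [b [Aa [Hb ->]]]].
  have [pt [H1 H2]] := IH b uTs Hb.
  exists (fun S => if S == T then a else pt S); split.
  + move=> S; rewrite in_cons; case: eqP => [-> //| _] /= hS; exact: H1.
  + rewrite big_cons eqxx H2; congr (_ + _).
    apply: eq_big_seq => S hS /=.
    idtac.
    case: eqP => // eST; by rewrite -eST hS in nT.
Qed.

Lemma big_ord_nth (V : Type) (F : 'rV[R]_n -> V) (op : SemiGroup.com_law V) (idx : V) (s : seq 'rV[R]_n) :
  \big[op/idx]_(k < size s) F s`_k = \big[op/idx]_(v <- s) F v.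
Proof. by rewrite (big_nth 0) big_mkord. Qed.

Lemma sum_delta_row (a : 'I_n) : \sum_i (delta_mx 0 a : 'rV[R]_n) 0 i = 1.
Proof. by rewrite sumE dotv_delta mxE. Qed.

Lemma simplexP (T : {set 'I_n}) x : simplex T x <->
  [/\ forall i, 0 <= x 0 i, forall i, i \notin T -> x 0 i = 0 & \sum_i x 0 i = 1].
Proof.
rewrite /simplex /conv; set V := [seq delta_mx 0 s | s <- enum T].
have memV : forall k : 'I_(size V), exists2 a, a \in T & V`_k = delta_mx 0 a.
  move=> k; have : V`_k \in V := mem_nth 0 (ltn_ord k).
  by move/mapP => [a]; rewrite mem_enum => aT ->; exists a.
split.
- move=> [lam [l0 [l1 ->]]].
  have coord : forall i, (\sum_k lam k *: V`_k) 0 i = \sum_k lam k * V`_k 0 i.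
    by move=> i; rewrite summxE; apply: eq_bigr => k _; rewrite mxE.
  split.
  + move=> i; rewrite coord; apply: sumr_ge0 => k _; apply: mulr_ge0 => //.
    by have [a _ ->] := memV k; rewrite mxE ler0n.
  + move=> i iT; rewrite coord big1 // => k _; have [a aT ->] := memV k.
    have ne : (i == a) = false by apply/negbTE/eqP => eia; rewrite eia aT in iT.
    by rewrite mxE eqxx ne mulr0.
  + under eq_bigr do rewrite coord.
    rewrite exchange_big /= -l1; apply: eq_bigr => k _.
    by rewrite -mulr_sumr; have [a _ ->] := memV k; rewrite sum_delta_row mulr1.
- move=> [h0 hT h1]; exists (fun k => dotv x V`_k); split; last split.
  + by move=> k; have [a _ ->] := memV k; rewrite dotv_delta.
  + rewrite (big_ord_nth (fun v => dotv x v)) big_map big_enum /= -h1.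
    rewrite big_mkcond; apply: eq_bigr => i _; rewrite dotv_delta.
    by case: ifP => // /negbT /hT ->.
  + rewrite (big_ord_nth (fun v => dotv x v *: v)) big_map big_enum /=.
    rewrite big_mkcond [LHS]row_sum_delta; apply: eq_bigr => i _; rewrite dotv_delta.
    by case: ifP => // /negbT /hT ->; rewrite scale0r.
Qed.

Lemma simplex_pos (T : {set 'I_n}) x : simplex T x -> exists2 k, 0 < x 0 k & k \in T.
Proof.
move/simplexP => [h0 hT h1].
case: (pickP (fun i => 0 < x 0 i)) => [k hk|h].
- exists k => //; apply/negPn/negP => /hT hx; by rewrite hx ltxx in hk.
- exfalso; have : \sum_i x 0 i = 0.
    by apply: big1 => i _; apply/eqP; rewrite eq_le h0 andbT leNgt h.
  by rewrite h1 => /eqP; rewrite oner_eq0.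
Qed.

Lemma simplex_supp (T : {set 'I_n}) x i : simplex T x -> 0 < x 0 i -> i \in T.
Proof.
move/simplexP => [h0 hT h1] hx; apply/negPn/negP => /hT h; by rewrite h ltxx in hx.
Qed.

Lemma ncone_simplex (T : {set 'I_n}) x w : simplex T x ->
  (ncone (simplex T) x w <-> forall i j, 0 < x 0 i -> j \in T -> w 0 j <= w 0 i).
Proof.
move=> Sx; have [h0 hT h1] := proj1 (simplexP T x) Sx.
split.
- move=> H i j xi jT.
  set y := x + x 0 i *: (delta_mx 0 j - delta_mx 0 i).
  have iT := simplex_supp Sx xi.
  have Sy : simplex T y.
    apply/simplexP; split.
    + move=> k; rewrite !mxE /=.
      have := h0 k; have := h0 i.
      case: (eqVneq k i) => [->|ne]; case: (k == j); case: (i == j) => /=; lra.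
    + move=> k kT; rewrite !mxE /= (hT k kT).
      have -> : (k == j) = false by apply/negbTE/eqP => e1; rewrite e1 jT in kT.
      have -> : (k == i) = false by apply/negbTE/eqP => e1; rewrite e1 iT in kT.
      by rewrite /= subrr mulr0 addr0.
    + by rewrite sumE dotvD dotvZ dotvB !dotv_delta !mxE -sumE h1 subrr mulr0 addr0.
  have := H y Sy; rewrite /y dotvD dotvZ dotvB !dotv_delta gerDl.
  by rewrite pmulr_rle0 // subr_le0.
- move=> H y Sy; have [i0 xi0 i0T] := simplex_pos Sx.
  have /simplexP [g0 gT g1] := Sy.
  set M := w 0 i0.
  have Ex : dotv w x = M.
    rewrite /dotv -[M]mulr1 -h1 mulr_sumr; apply: eq_bigr => i _.
    have := h0 i; rewrite le_eqVlt => /orP [/eqP <-|pos]; first by rewrite !mulr0.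
    have iT := simplex_supp Sx pos.
    have e1 := H i0 i xi0 iT; have e2 := H i i0 pos i0T.
    by have -> : w 0 i = M by apply/eqP; rewrite eq_le e1 e2.
  rewrite Ex -[M]mulr1 -g1 mulr_sumr /dotv; apply: ler_sum => i _.
  case: (boolP (i \in T)) => iT.
  + by apply: ler_wpM2r => //; apply: H.
  + by rewrite (gT i iT) !mulr0.
Qed.

End Geo.

Lemma max_elem (n : nat) (T : {set 'I_n}) (dom : 'I_n -> 'I_n -> Prop) : T != set0 ->
  (forall a, dom a a) -> (forall a b c, dom a b -> dom b c -> dom a c) ->
  exists2 a, a \in T & forall b, b \in T -> dom b a -> dom a b.
Proof.
move=> /set0Pn [a0 a0T] refl trans.
pose D a := [set c in T | `[< dom a c >]].
case: (arg_maxnP (fun a => #|D a|) a0T) => a aT amax.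
exists a => // b bT hba.
have sub : D a \subset D b.
  apply/subsetP => c; rewrite !inE => /andP [cT /asboolP h]; rewrite cT /=.
  by apply/asboolP; exact: trans hba h.
have eq : D a = D b by apply/eqP; rewrite eqEcard sub /=; exact: amax.
have : b \in D b by rewrite inE bT /=; apply/asboolP.
by rewrite -eq inE => /andP [_ /asboolP].
Qed.

Section Transfer.
Variables (R : realType) (n : nat).

Lemma transfer (Fs Gs : seq {set 'I_n}) :
  uniq Fs -> uniq Gs ->
  (forall T, T \in Gs -> T != set0) ->
  (forall S, S \in Fs -> forall i j, i \in S -> j \in S ->
     exists T, [/\ T \in Gs, i \in T, j \in T & T \subset S]) ->
  (forall T, T \in Gs -> forall i j, i \in T -> j \in T ->
     exists S, [/\ S \in Fs, i \in S, j \in S & S \subset T]) ->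
  forall x : 'rV[R]_n, msum [seq simplex T | T <- Fs] x ->
  exists y, msum [seq simplex T | T <- Gs] y /\
     forall w, ncone (msum [seq simplex T | T <- Fs]) x w <->
               ncone (msum [seq simplex T | T <- Gs]) y w.
Proof.
move=> uF uG G0 HFG HGF x Hx.
have [pt [Hpt ->]] := msum_decomp uF Hx.
have [_ NP] := msum_pt Hpt.
pose C (w : 'rV[R]_n) := forall S, S \in Fs -> forall i j, 0 < pt S 0 i -> j \in S -> w 0 j <= w 0 i.
have CE : forall w, ncone (msum [seq simplex T | T <- Fs]) (\sum_(T <- Fs) pt T) w <-> C w.
  move=> w; split.
  - move=> h S hS; exact: (proj1 (ncone_simplex w (Hpt S hS)) (proj1 (NP w) h S hS)).
  - move=> h; apply: (proj2 (NP w)) => S hS; apply: (proj2 (ncone_simplex w (Hpt S hS))); exact: h.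
pose dom a b := forall w, C w -> w 0 b <= w 0 a.
pose V (T : {set 'I_n}) := [set a in T | `[< forall b, b \in T -> dom a b >]].
have VT : forall T : {set 'I_n}, V T \subset T by move=> T; apply/subsetP => a; rewrite inE => /andP [].
have Vne : forall T, T \in Gs -> V T != set0.
  move=> T hT.
  have [a aT amax] : exists2 a, a \in T & forall b, b \in T -> dom b a -> dom a b.
    apply: max_elem (G0 T hT) _ _; first by move=> a w _.
    by move=> a b c hab hbc w Cw; exact: le_trans (hbc w Cw) (hab w Cw).
  apply/set0Pn; exists a; rewrite inE aT /=; apply/asboolP => b bT.
  have [P [PF aP bP PT]] := HGF T hT a b aT bT.
  have [k hk kP] := simplex_pos (Hpt P PF).
  have domk : forall c, c \in P -> dom k c by move=> c cP w Cw; exact: Cw P PF k c hk cP.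
  have kT : k \in T := subsetP PT k kP.
  have hak := amax k kT (domk a aP).
  by move=> w Cw; exact: le_trans (domk b bP w Cw) (hak w Cw).
pose qt (T : {set 'I_n}) : 'rV[R]_n := \row_i (if i \in V T then (#|V T|%:R)^-1 else 0).
have qpos : forall (T : {set 'I_n}) i, (0 < qt T 0 i) = (i \in V T).
  move=> T i; rewrite mxE; case: ifP => // iV.
  by rewrite invr_gt0 ltr0n card_gt0; apply/set0Pn; exists i.
have Sq : forall T, T \in Gs -> simplex T (qt T).
  move=> T hT; apply/simplexP; split.
  - by move=> i; rewrite mxE; case: ifP => // _; rewrite invr_ge0 ler0n.
  - move=> i iT; rewrite mxE; case: ifP => // iV.
    by move: iT; rewrite (subsetP (VT T) i iV).
  - under eq_bigr do rewrite mxE.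
    rewrite -big_mkcond /= sumr_const. rewrite -(mulr_natr (#|V T|%:R)^-1) mulVf //.
    by rewrite pnatr_eq0 -lt0n card_gt0; exact: Vne.
have [Qy NQ] := msum_pt Sq.
exists (\sum_(T <- Gs) qt T); split => // w.
apply: (iff_trans (CE w)); split.
- move=> Cw; apply: (proj2 (NQ w)) => T hT; apply: (proj2 (ncone_simplex w (Sq T hT))) => i j.
  rewrite qpos inE => /andP [iT /asboolP hi] jT; exact: hi j jT w Cw.
- move=> /(proj1 (NQ w)) h S hS i j hi jS.
  have iS := simplex_supp (Hpt S hS) hi.
  have [T [TG iT jT TS]] := HFG S hS i j iS jS.
  have := proj1 (ncone_simplex w (Sq T TG)) (h T TG) i j; apply => //.
  rewrite qpos inE iT /=; apply/asboolP => b bT w' Cw'.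
  exact: Cw' S hS i b hi (subsetP TS b bT).
Qed.

End Transfer.

End GeoComb.
Import GeoComb.

Module GraphM.

Lemma last_take_nth (T : Type) (x : T) p a : a <= size p -> last x (take a p) = nth x (x :: p) a.
Proof.
elim: p x a => [|y p IH] x [|a] //= h.
by rewrite IH // (set_nth_default x) //.
Qed.

Section Graph.
Variables (n : nat) (e : rel 'I_n).

Definition rS (S : {set 'I_n}) : rel 'I_n := fun a b => [&& a \in S, b \in S & e a b].

Lemma path_conn (S : {set 'I_n}) : induced_is_path e S -> induced_connected e S.
Proof.
move=> [s [us memS He]] x y xS yS.
have xs : x \in s by rewrite memS. have ys : y \in s by rewrite memS.
have edge : forall k, k.+1 < size s ->
   rS S (nth x s k) (nth x s k.+1) /\ rS S (nth x s k.+1) (nth x s k).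
  move=> k hk; have hk' : k < size s by apply: ltnW.
  have := He (Ordinal hk') (Ordinal hk); rewrite !(tnth_nth x) /= eqxx /= => h1.
  have := He (Ordinal hk) (Ordinal hk'); rewrite !(tnth_nth x) /= eqxx orbT => h2.
  by rewrite /rS /= -!memS !mem_nth //; split.
have chain : forall d k, k + d < size s ->
   connect (rS S) (nth x s k) (nth x s (k + d)) /\ connect (rS S) (nth x s (k + d)) (nth x s k).
  elim=> [|d IH] k hk; first by rewrite addn0 connect0.
  have hk1 : k + d < size s by rewrite addnS in hk; apply: ltnW.
  have [c1 c2] := IH k hk1.
  have [e1 e2] := edge (k + d) ltac:(by rewrite -addnS).
  rewrite addnS; split; [exact: connect_trans c1 (connect1 e1) | exact: connect_trans (connect1 e2) c2].
have key : forall a b, a < size s -> b < size s -> connect (rS S) (nth x s a) (nth x s b).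
  move=> a b ha hb; case: (leqP a b) => hab.
  - by have := chain (b - a) a; rewrite subnKC // => /(_ hb) [].
  - by have := chain (a - b) b; rewrite subnKC ?(ltnW hab) // => /(_ ha) [].
have := key (index x s) (index y s); rewrite !nth_index // !index_mem; apply => //.
Qed.

Lemma path_mem (S : {set 'I_n}) q : forall i, path (rS S) i q -> i \in S -> forall z, z \in i :: q -> z \in S.
Proof.
elim: q => [|y q IH] i /=; first by move=> _ iS z; rewrite inE => /eqP ->.
move=> /andP [/and3P [_ yS _] hq] iS z; rewrite inE => /orP [/eqP -> //|]; exact: IH.
Qed.

Hypothesis (esym : symmetric e) (eirr : irreflexive e).

Definition chordless (i : 'I_n) (s : seq 'I_n) := forall a b, a < size s -> b < size s ->
  e (nth i s a) (nth i s b) -> (a.+1 == b) || (b.+1 == a).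

Lemma shorten_induced (S : {set 'I_n}) i : i \in S -> forall N p, size p < N -> path (rS S) i p -> uniq (i :: p) ->
  exists q, [/\ path (rS S) i q, uniq (i :: q), last i q = last i p, {subset q <= p} & chordless i (i :: q)].
Proof.
move=> iS; elim=> [//|N IH] p hN hp up.
case: (boolP [exists a : 'I_(size (i :: p)), exists b : 'I_(size (i :: p)),
   (a.+1 < b) && e (nth i (i :: p) a) (nth i (i :: p) b)]).
- move=> /existsP [a /existsP [b /andP [hab eab]]].
  move: (ltn_ord a) (ltn_ord b) hab eab.
  move: (nat_of_ord a) (nat_of_ord b) => {}a {}b as_ bs hab eab; rewrite /= in as_ bs.
  have hb : b.-1 < size p by lia.
  have ha : a <= size p by lia.
  have nth_b : nth i (i :: p) b = nth i p b.-1.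
    by have -> : (b : nat) = b.-1.+1 by lia.
  rewrite nth_b in eab.
  have memS := path_mem hp iS.
  pose p' := take a p ++ drop b.-1 p.
  have hp' : path (rS S) i p'.
    rewrite cat_path; apply/andP; split.
    - by move: hp; rewrite -{1}(cat_take_drop a p) cat_path => /andP [h _].
    - rewrite last_take_nth // (drop_nth i hb) /=; apply/andP; split.
      + rewrite /rS /= eab andbT -nth_b !memS //; exact: mem_nth.
      + move: hp; rewrite -{1}(cat_take_drop b p) cat_path => /andP [_].
        have b0 : 0 < b by lia. have bp : b <= size p by lia.
        by rewrite last_take_nth // nth_b prednK.
  have up' : uniq (i :: p').
    apply: subseq_uniq up; rewrite /= eqxx.
    have E : p = take a p ++ drop a p by rewrite cat_take_drop.
    rewrite [X in subseq _ X]E cat_subseq //.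
    have -> : drop b.-1 p = drop (b.-1 - a) (drop a p) by rewrite drop_drop subnK //; lia.
    exact: drop_subseq.
  have sp' : size p' < N by rewrite size_cat size_takel // size_drop; lia.
  have [q [q1 q2 q3 q4 q5]] := IH p' sp' hp' up'.
  exists q; split => //.
  + rewrite q3 /p' -[in RHS](cat_take_drop b.-1 p) !last_cat (drop_nth i hb) //.
  + by move=> z /q4; rewrite mem_cat => /orP [/mem_take|/mem_drop].
- move=> /existsPn H; exists p; split => //.
  move=> a b ha hb eab.
  have nab : a != b by apply/eqP => eq; rewrite eq eirr in eab.
  case: (ltnP a.+1 b) => h1.
    have := H (Ordinal ha); move/existsPn => /(_ (Ordinal hb)); rewrite /= h1 eab //.
  case: (ltnP b.+1 a) => h2.
    have := H (Ordinal hb); move/existsPn => /(_ (Ordinal ha)); rewrite /= h2 esym eab //.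
  case: (ltngtP a b) => hc.
  - by apply/orP; left; apply/eqP; lia.
  - by apply/orP; right; apply/eqP; lia.
  - by rewrite hc eqxx in nab.
Qed.

Lemma conn_split (S : {set 'I_n}) i j : induced_connected e S -> i \in S -> j \in S ->
  exists T : {set 'I_n}, [/\ T \subset S, i \in T, j \in T & induced_is_path e T].
Proof.
move=> hc iS jS; have := hc i j iS jS.
move/connectP => [p hp ->].
case: (shortenP hp) => p' hp' up' _.
have [q [q1 q2 q3 q4 q5]] := shorten_induced iS (ltnSn (size p')) hp' up'.
have memS := path_mem q1 iS.
exists [set z in i :: q]; split.
- by apply/subsetP => z; rewrite inE; exact: memS.
- by rewrite inE mem_head.
- by rewrite inE -q3 mem_last.
- exists (i :: q); split => //.
  + by move=> z; rewrite in_set.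
  + move=> a b; rewrite !(tnth_nth i) /=.
    apply/idP/idP; first by apply: q5.
    case/orP => /eqP hab.
    * have ha : a < size q by have := ltn_ord b; rewrite /= -hab.
      have := (pathP i q1) a ha; rewrite -hab /= => /and3P [_ _].
      by [].
    * have hb : b < size q by have := ltn_ord a; rewrite /= -hab.
      have := (pathP i q1) b hb; rewrite -hab /= => /and3P [_ _].
      by rewrite esym.
Qed.

End Graph.

End GraphM.
Import GraphM.


Theorem mainTheorem6 (R : realType) (n : nat) (e : rel 'I_n) (m : nat) :
  simple_graph e -> graph_connected e -> (0 < m)%N ->
  normally_equivalent (@Qconn R n e m) (@Qpath R n e m).
Proof.
move=> [esym eirr] _ _.
set Fc := enum [set T : {set 'I_n} | [&& T != set0, (#|T| <= m.+1)%N & `[< induced_connected e T >] ]].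
set Fp := enum [set T : {set 'I_n} | [&& T != set0, (#|T| <= m.+1)%N & `[< induced_is_path e T >] ]].
have memc : forall T, (T \in Fc) = [&& T != set0, (#|T| <= m.+1)%N & `[< induced_connected e T >] ].
  by move=> T; rewrite mem_enum inE.
have memp : forall T, (T \in Fp) = [&& T != set0, (#|T| <= m.+1)%N & `[< induced_is_path e T >] ].
  by move=> T; rewrite mem_enum inE.
have p2c : forall T, T \in Fp -> T \in Fc.
  move=> T; rewrite memp memc => /and3P [h1 h2 /asboolP h3]; rewrite h1 h2 /=.
  by apply/asboolP; exact: path_conn.
have c2p : forall S, S \in Fc -> forall i j, i \in S -> j \in S ->
    exists T, [/\ T \in Fp, i \in T, j \in T & T \subset S].
  move=> S; rewrite memc => /and3P [h1 h2 /asboolP h3] i j iS jS.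
  have [T [TS iT jT hT]] := conn_split esym eirr h3 iS jS.
  exists T; split => //; rewrite memp; apply/and3P; split.
  - by apply/set0Pn; exists i.
  - exact: leq_trans (subset_leq_card TS) h2.
  - exact/asboolP.
have p2p : forall S, S \in Fp -> forall i j, i \in S -> j \in S ->
    exists T, [/\ T \in Fc, i \in T, j \in T & T \subset S].
  by move=> S hS i j iS jS; exists S; split => //; exact: p2c.
have G0c : forall T, T \in Fc -> T != set0 by move=> T; rewrite memc => /and3P [].
have G0p : forall T, T \in Fp -> T != set0 by move=> T; rewrite memp => /and3P [].
split.
- move=> x Hx.
  have [y [Hy Hw]] := transfer (enum_uniq _) (enum_uniq _) G0p c2p p2p Hx.
  exists y; split; [exact: Hy | exact: Hw].
- move=> y Hy.
  have [x [Hx Hw]] := transfer (enum_uniq _) (enum_uniq _) G0c p2p c2p Hy.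
  exists x; split; [exact: Hx | move=> w; apply: iff_sym; exact: Hw].
Qed.
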